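(* For every real $R<10/7$ there is no $R$-competitive F-system.
   Context: F-system: a family $\mathcal F=\{F^c_{t,k}\}$ of sets of positive integers, indexed by $c\in\{A,B\}$ and integers $0<k\le t$, such that (F1) $|F^c_{t,k}|\ge k$ for all $c,t,k$; and (F2) $F^A_{t,k}\cap F^B_{t',k'}=\emptyset$ for all $k\le t$, $k'\le t'$ with $k+k'\le\max(t,t')$. An F-system is $R$-competitive if there is a constant $\lambda$ (independent of $t$) such that for every positive integer $t$, $\left|\bigcup_{c\in\{A,B\}}\bigcup_{0<\kappa\le\tau\le t}F^c_{\tau,\kappa}\right|\le Rt+\lambda$. *)

(* Defs.v *)
From Stdlib Require Import Reals Lra Lia Arith List.
Import ListNotations.
Open Scope R_scope.

Inductive color := cA | cB.

(* A Ffamily F^c_{t,k} of sets of positive integers, as predicates on nat.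
   Only indices with 0 < k <= t are meaningful. *)
Definition Ffamily := color -> nat -> nat -> nat -> Prop.

Definition card_ge (S : nat -> Prop) (k : nat) : Prop :=
  exists l : list nat, NoDup l /\ length l = k /\ Forall S l.

Definition card_leR (S : nat -> Prop) (x : R) : Prop :=
  forall l : list nat, NoDup l -> Forall S l -> INR (length l) <= x.

Definition F_system (F : Ffamily) : Prop :=
  (forall c t k x, (0 < k <= t)%nat -> F c t k x -> (0 < x)%nat) /\
  (forall c t k, (0 < k <= t)%nat -> card_ge (F c t k) k) /\
  (forall t k t' k', (0 < k <= t)%nat -> (0 < k' <= t')%nat ->
     (k + k' <= Nat.max t t')%nat ->
     forall x, F cA t k x -> F cB t' k' x -> False).

Definition union_upto (F : Ffamily) (t : nat) : nat -> Prop :=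
  fun x => exists c tau kappa, (0 < kappa <= tau)%nat /\ (tau <= t)%nat /\ F c tau kappa x.

Definition competitive (Rc : R) (F : Ffamily) : Prop :=
  exists lam : R, forall t : nat, (0 < t)%nat ->
    card_leR (union_upto F t) (Rc * INR t + lam).

(* Main.v *)
Require Import Defs.
From Stdlib Require Import Reals Lra Lia Arith List Classical Psatz ClassicalEpsilon.
Import ListNotations.
Open Scope R_scope.

Fixpoint sumR {A : Type} (f : A -> R) (l : list A) : R :=
  match l with nil => 0 | x :: l' => f x + sumR f l' end.

Lemma sumR_app {A} (f : A -> R) l1 l2 : sumR f (l1 ++ l2) = sumR f l1 + sumR f l2.
Proof. induction l1; simpl; lra. Qed.

Lemma sumR_ext_in {A} (f g : A -> R) l : (forall x, In x l -> f x = g x) -> sumR f l = sumR g l.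
Proof. induction l; simpl; intros H; auto. rewrite H by auto. rewrite IHl; auto. Qed.

Lemma sumR_le_in {A} (f g : A -> R) l : (forall x, In x l -> f x <= g x) -> sumR f l <= sumR g l.
Proof. induction l; simpl; intros H. lra. pose proof (H a (or_introl eq_refl)). pose proof (IHl (fun x h => H x (or_intror h))). lra. Qed.

Lemma sumR_nonneg {A} (f : A -> R) l : (forall x, In x l -> 0 <= f x) -> 0 <= sumR f l.
Proof. induction l; simpl; intros H. lra. pose proof (H a (or_introl eq_refl)). pose proof (IHl (fun x h => H x (or_intror h))). lra. Qed.

Lemma sumR_plus {A} (f g : A -> R) l : sumR (fun x => f x + g x) l = sumR f l + sumR g l.
Proof. induction l; simpl; lra. Qed.

Lemma sumR_scal {A} (c : R) (f : A -> R) l : sumR (fun x => c * f x) l = c * sumR f l.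
Proof. induction l; simpl. lra. rewrite IHl. lra. Qed.

Lemma sumR_swap {A B} (f : A -> B -> R) la lb :
  sumR (fun a => sumR (fun b => f a b) lb) la = sumR (fun b => sumR (fun a => f a b) la) lb.
Proof.
  induction la; simpl.
  - induction lb; simpl; lra.
  - rewrite IHla. rewrite <- sumR_plus. reflexivity.
Qed.

Definition indl (x : nat) (l : list nat) : R := if in_dec Nat.eq_dec x l then 1 else 0.

Lemma indl_01 x l : 0 <= indl x l <= 1.
Proof. unfold indl; destruct in_dec; lra. Qed.

Lemma count_ind (U : list nat) : NoDup U -> forall l, NoDup l -> incl l U ->
  sumR (fun y => indl y l) U = INR (length l).
Proof.
  induction U as [|u U IH]; intros HU l Hl Hinc; simpl.
  - destruct l as [|z l]. reflexivity. exfalso. apply (Hinc z); simpl; auto.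
  - inversion HU as [|u' U' Hu HU']; subst.
    unfold indl at 1. destruct (in_dec Nat.eq_dec u l) as [Hin|Hnin].
    + destruct (in_split u l Hin) as [l1 [l2 Heq]]. subst l.
      assert (Hnd : NoDup (l1 ++ l2)) by (eapply NoDup_remove_1; eauto).
      assert (Hnu : ~ In u (l1 ++ l2)) by (eapply NoDup_remove_2; eauto).
      rewrite (sumR_ext_in _ (fun y => indl y (l1 ++ l2))).
      * rewrite IH; auto.
        -- rewrite !length_app. simpl. rewrite Nat.add_succ_r, S_INR. lra.
        -- intros z Hz. assert (Hz' : In z (l1 ++ u :: l2)) by (apply in_or_app; apply in_app_or in Hz; simpl; tauto).
           destruct (Hinc z Hz') as [->|]; auto. contradiction.
      * intros z Hz. unfold indl. assert (z <> u) by (intro; subst; contradiction).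
        destruct (in_dec Nat.eq_dec z (l1 ++ u :: l2)) as [h1|h1]; destruct (in_dec Nat.eq_dec z (l1 ++ l2)) as [h2|h2]; auto.
        -- exfalso. apply h2. apply in_app_or in h1. apply in_or_app. simpl in h1. destruct h1 as [h1|[h1|h1]]; auto. congruence.
        -- exfalso. apply h1. apply in_app_or in h2. apply in_or_app. simpl. destruct h2; auto.
    + rewrite IH; auto. lra. intros z Hz. destruct (Hinc z Hz) as [->|]; auto. contradiction.
Qed.

Lemma count_filter (U : list nat) (P : nat -> bool) :
  sumR (fun x => if P x then 1 else 0) U = INR (length (filter P U)).
Proof. induction U; simpl. reflexivity. destruct (P a).
  - change (length (a :: filter P U)) with (S (length (filter P U))). rewrite S_INR, IHU. lra.
  - rewrite IHU. lra. Qed.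


Definition w (s : nat) : R := / INR s - / INR (S s).

Lemma inv_le (a b : nat) : (0 < b)%nat -> (b <= a)%nat -> / INR a <= / INR b.
Proof. intros. apply Rinv_le_contravar. apply lt_0_INR; lia. apply le_INR; lia. Qed.

Lemma inv_pos (a : nat) : (0 < a)%nat -> 0 < / INR a.
Proof. intros. apply Rinv_0_lt_compat. apply lt_0_INR; lia. Qed.

Lemma w_nonneg s : (1 <= s)%nat -> 0 <= w s.
Proof. intros. unfold w. pose proof (inv_le (S s) s ltac:(lia) ltac:(lia)). lra. Qed.

Lemma tele_max : forall K m f, (1 <= m)%nat -> (f <= m + K)%nat ->
  sumR (fun s => w s * (if (f <=? s)%nat then 1 else 0)) (seq m K) = / INR (Nat.max m f) - / INR (m + K).
Proof.
  induction K; intros m f Hm Hf.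
  - simpl. rewrite Nat.add_0_r. rewrite Nat.max_l by lia. lra.
  - cbn [seq sumR]. rewrite IHK by lia.
    destruct (Nat.leb_spec f m).
    + rewrite Nat.max_l by lia. rewrite Nat.max_l by lia.
      replace (S m + K)%nat with (m + S K)%nat by lia. replace (w m) with (/ INR m - / INR (S m)) by reflexivity. lra.
    + rewrite !Nat.max_r by lia. replace (S m + K)%nat with (m + S K)%nat by lia. lra.
Qed.

Lemma window : forall K m L H, (1 <= m)%nat -> (1 <= L)%nat ->
  sumR (fun s => w s * (if andb (L <=? s)%nat (s <=? H)%nat then 1 else 0)) (seq m K)
  <= Rmax 0 (/ INR (Nat.max m L) - / INR (S H)).
Proof.
  induction K; intros m L H Hm HL.
  - simpl. apply Rmax_l.
  - cbn [seq sumR]. specialize (IHK (S m) L H ltac:(lia) HL).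
    destruct (Nat.leb_spec L m); destruct (Nat.leb_spec m H); cbn [andb].
    + rewrite (Nat.max_l (S m) L) in IHK by lia. rewrite (Nat.max_l m L) by lia.
      pose proof (inv_le (S H) (S m) ltac:(lia) ltac:(lia)).
      pose proof (inv_le (S m) m ltac:(lia) ltac:(lia)).
      rewrite Rmax_right in IHK by lra. rewrite Rmax_right.
      replace (w m) with (/ INR m - / INR (S m)) by reflexivity. lra. pose proof (inv_le (S H) m ltac:(lia) ltac:(lia)). lra.
    + rewrite (Nat.max_l (S m) L) in IHK by lia. rewrite Rmax_left in IHK.
      2:{ pose proof (inv_le (S m) (S H) ltac:(lia) ltac:(lia)). lra. }
      pose proof (Rmax_l 0 (/ INR (Nat.max m L) - / INR (S H))). lra.
    + rewrite (Nat.max_r (S m) L) in IHK by lia. rewrite (Nat.max_r m L) by lia. lra.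
    + rewrite (Nat.max_r (S m) L) in IHK by lia. rewrite (Nat.max_r m L) by lia. lra.
Qed.

Lemma sumR_const {A} (c : R) (l : list A) : sumR (fun _ => c) l = c * INR (length l).
Proof. induction l; simpl. lra. rewrite IHl. destruct (length l); simpl; lra. Qed.

Lemma block n : (1 <= n)%nat -> sumR (fun s => / INR (S s)) (seq n n) >= 1/2.
Proof.
  intros Hn.
  assert (H : sumR (fun _ => / INR (2 * n)) (seq n n) <= sumR (fun s => / INR (S s)) (seq n n)).
  { apply sumR_le_in. intros s Hs. apply in_seq in Hs. apply inv_le; lia. }
  rewrite sumR_const, length_seq in H.
  rewrite mult_INR in H. replace (INR 2) with 2 in H by (simpl; lra).
  assert (0 < INR n) by (apply lt_0_INR; lia).
  replace (/ (2 * INR n) * INR n) with (1/2) in H by (field; lra). lra.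
Qed.

Lemma harm_div m : (1 <= m)%nat -> forall J : nat, exists K, sumR (fun s => / INR (S s)) (seq m K) >= INR J / 2.
Proof.
  intros Hm J. induction J.
  - exists 0%nat. simpl. lra.
  - destruct IHJ as [K HK]. exists (K + (m + K))%nat.
    rewrite seq_app, sumR_app. pose proof (block (m + K) ltac:(lia)). rewrite S_INR. lra.
Qed.

Lemma w_mul s : (1 <= s)%nat -> w s * INR s = / INR (S s).
Proof. intros. unfold w. rewrite S_INR. assert (0 < INR s) by (apply lt_0_INR; lia). field. lra. Qed.


Lemma core (F X Y : R) : 0 <= X -> X <= F/3 -> 0 <= Y -> Y <= F/3 ->
  2/7*(Rmax 0 (Rmin F (3*X) - 3*Y) + Rmax 0 (Rmin F (3*Y) - 3*X))
  + 3/7*(Rmax 0 (Rmin F (4*X) - 2*Y) + Rmax 0 (Rmin F (4*Y) - 2*X))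
  + 2/7*(Rmax 0 (Rmin F (6*X) - 0*Y) + Rmax 0 (Rmin F (6*Y) - 0*X)) <= F.
Proof.
  intros.
  rewrite (Rmin_right F (3*X)) by lra. rewrite (Rmin_right F (3*Y)) by lra.
  unfold Rmin.
  destruct (Rle_dec F (4*X)); destruct (Rle_dec F (4*Y)); destruct (Rle_dec F (6*X)); destruct (Rle_dec F (6*Y));
  unfold Rmax;
  repeat match goal with |- context [Rle_dec ?a ?b] => destruct (Rle_dec a b) end; lra.
Qed.

Definition lb (c : nat) (F X Y : R) : R :=
  Rmax 0 (Rmin F (INR c * X) - INR (6 - c) * Y + INR ((6 - c) * (5 - c)) * (Y * Y)).

Lemma Rmax_plus_le u e : 0 <= e -> Rmax 0 (u + e) <= Rmax 0 u + e.
Proof. intros. unfold Rmax. repeat destruct Rle_dec; lra. Qed.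

Lemma elem_real (F X Y sA3 sA4 sA6 sB3 sB4 sB6 : R) :
  0 < F -> 0 <= X -> X <= F/3 -> 0 <= Y -> Y <= F/3 ->
  sA3 <= lb 3 F X Y -> sA4 <= lb 4 F X Y -> sA6 <= lb 6 F X Y ->
  sB3 <= lb 3 F Y X -> sB4 <= lb 4 F Y X -> sB6 <= lb 6 F Y X ->
  2/7*(sA3+sB3) + 3/7*(sA4+sB4) + 2/7*(sA6+sB6) <= F + 4/7 * (F * F).
Proof.
  intros HF HX1 HX2 HY1 HY2 h1 h2 h3 h4 h5 h6.
  unfold lb in *. cbn [Nat.sub Nat.mul Nat.add] in *.
  assert (e0 : INR 0 = 0) by reflexivity.
  assert (e2 : INR 2 = 2) by (simpl; ring). assert (e3 : INR 3 = 3) by (simpl; ring).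
  assert (e4 : INR 4 = 4) by (simpl; ring). assert (e6 : INR 6 = 6) by (simpl; ring).
  rewrite ?e0, ?e2, ?e3, ?e4, ?e6 in *.
  pose proof (core F X Y HX1 HX2 HY1 HY2) as Hc.
  pose proof (Rmax_plus_le (Rmin F (3*X) - 3*Y) (6*(Y*Y)) ltac:(nra)).
  pose proof (Rmax_plus_le (Rmin F (3*Y) - 3*X) (6*(X*X)) ltac:(nra)).
  pose proof (Rmax_plus_le (Rmin F (4*X) - 2*Y) (2*(Y*Y)) ltac:(nra)).
  pose proof (Rmax_plus_le (Rmin F (4*Y) - 2*X) (2*(X*X)) ltac:(nra)).
  assert (Y*Y <= F*F/9) by nra. assert (X*X <= F*F/9) by nra.
  replace (Rmin F (6*X) - 0*Y + 0*(Y*Y)) with (Rmin F (6*X) - 0*Y) in h3 by ring.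
  replace (Rmin F (6*Y) - 0*X + 0*(X*X)) with (Rmin F (6*Y) - 0*X) in h6 by ring.
  replace (Rmin F (3*X) - 3*Y + 6*(Y*Y)) with ((Rmin F (3*X) - 3*Y) + 6*(Y*Y)) in h1 by ring.
  lra.
Qed.

Lemma frac_le (k p q : R) : 0 < p -> 0 < q -> k * p <= q -> k / q <= / p.
Proof.
  intros Hp Hq H. unfold Rdiv.
  apply (Rmult_le_reg_l (p * q)). nra.
  replace (p * q * (k * / q)) with (k * p) by (field; lra).
  replace (p * q * / p) with q by (field; lra). exact H.
Qed.

Lemma frac_ge (k p q : R) : 0 < p -> 0 < q -> q <= k * p -> / p <= k / q.
Proof.
  intros Hp Hq H. unfold Rdiv.
  apply (Rmult_le_reg_l (p * q)). nra.
  replace (p * q * (k * / q)) with (k * p) by (field; lra).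
  replace (p * q * / p) with q by (field; lra). exact H.
Qed.

Lemma inv_gap (bb d : R) : 1 <= bb -> 0 <= d -> / bb - d * (/ bb * / bb) <= / (bb + d).
Proof.
  intros Hb Hd.
  replace (/ bb - d * (/ bb * / bb)) with ((bb - d) / (bb * bb)) by (field; lra).
  apply frac_le. lra. nra. nra.
Qed.

Lemma inv_le' (a b : nat) : (0 < b)%nat -> (b <= a)%nat -> / INR a <= / INR b.
Proof. intros. apply Rinv_le_contravar. apply lt_0_INR; lia. apply le_INR; lia. Qed.

Lemma level_real (c m L H f a : nat) (Y : R) (sg : R) :
  (c = 3 \/ c = 4 \/ c = 6)%nat -> (1 <= f)%nat -> (f <= L)%nat -> (1 <= a)%nat -> (a <= c * L)%nat ->
  0 <= Y -> INR (6 - c) * Y - INR ((6 - c) * (5 - c)) * (Y * Y) <= / INR (S H) ->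
  sg <= Rmax 0 (/ INR (Nat.max m L) - / INR (S H)) ->
  sg <= lb c (/ INR f) (/ INR a) Y.
Proof.
  intros Hc Hf HfL Ha HaL HY HH Hs.
  assert (h1 : / INR (Nat.max m L) <= / INR L) by (apply inv_le'; lia).
  assert (h2 : / INR L <= / INR f) by (apply inv_le'; lia).
  assert (h3 : / INR L <= INR c * / INR a).
  { replace (INR c * / INR a) with (INR c / INR a) by (unfold Rdiv; ring).
    apply frac_ge. apply lt_0_INR; lia. apply lt_0_INR; lia. rewrite <- mult_INR. apply le_INR. lia. }
  unfold lb. eapply Rle_trans. exact Hs.
  apply Rle_max_compat_l. unfold Rmin. destruct Rle_dec; lra.
Qed.

Lemma H_bound (c H b : nat) : (c = 3 \/ c = 4 \/ c = 6)%nat -> (1 <= b)%nat -> ((6 - c) * H + 1 <= b)%nat ->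
  INR (6 - c) * / INR b - INR ((6 - c) * (5 - c)) * (/ INR b * / INR b) <= / INR (S H).
Proof.
  intros Hc Hb HH.
  assert (Hb' : 1 <= INR b) by (apply (le_INR 1); lia).
  assert (HS : 0 < INR (S H)) by (apply lt_0_INR; lia).
  assert (0 < / INR (S H)) by (apply Rinv_0_lt_compat; lra).
  destruct Hc as [Hc|[Hc|Hc]]; subst c; cbn [Nat.sub Nat.mul Nat.add].
  - pose proof (inv_gap (INR b) 2 Hb' ltac:(lra)).
    assert (3 / (INR b + 2) <= / INR (S H)).
    { apply frac_le; try lra. rewrite S_INR. assert (INR (3 * H + 1) <= INR b) by (apply le_INR; lia).
      rewrite plus_INR, mult_INR in H2. simpl in H2. lra. }
    replace (INR 3) with 3 by (simpl; ring). replace (INR 6) with 6 by (simpl; ring).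
    unfold Rdiv in H2. lra.
  - pose proof (inv_gap (INR b) 1 Hb' ltac:(lra)).
    assert (2 / (INR b + 1) <= / INR (S H)).
    { apply frac_le; try lra. rewrite S_INR. assert (INR (2 * H + 1) <= INR b) by (apply le_INR; lia).
      rewrite plus_INR, mult_INR in H2. simpl in H2. lra. }
    replace (INR 2) with 2 by (simpl; ring).
    unfold Rdiv in H2. lra.
  - change (INR 0) with 0. lra.
Qed.


Lemma min_ex (P : nat -> Prop) : (exists n, P n) -> exists n, P n /\ forall k, P k -> (n <= k)%nat.
Proof.
  intros [n Hn]. apply NNPP. intros Hno.
  assert (Hall : forall j k, (k <= j)%nat -> ~ P k).
  { induction j; intros k Hk Pk.
    - apply Hno. exists k. split; auto. intros k' _. lia.
    - destruct (Nat.eq_dec k (S j)).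
      + subst. apply Hno. exists (S j). split; auto. intros k' Pk'.
        destruct (Nat.le_gt_cases (S j) k'); auto. exfalso. apply (IHj k'); auto; lia.
      + apply (IHj k); auto; lia. }
  apply (Hall n n); auto.
Qed.

Lemma max_ex (P : nat -> Prop) (B : nat) : (exists n, P n) -> (forall n, P n -> (n <= B)%nat) ->
  exists n, P n /\ forall k, P k -> (k <= n)%nat.
Proof.
  intros [n Hn] HB.
  destruct (min_ex (fun j => P (B - j)%nat /\ (j <= B)%nat)) as [j [[Pj Hj] Hmin]].
  { exists (B - n)%nat. split. replace (B - (B - n))%nat with n by (specialize (HB n Hn); lia). auto. lia. }
  exists (B - j)%nat. split; auto. intros k Pk. specialize (HB k Pk).
  assert (j <= B - k)%nat. { apply Hmin. split. replace (B - (B - k))%nat with k by lia. auto. lia. }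
  lia.
Qed.

Definition levs : list nat := [3;4;6]%nat.

Lemma level_bound (mem : nat -> nat -> Prop) (ind : nat -> nat -> R) (m K f a c : nat) (Y : R) :
  (forall s c', (ind s c' = 1 /\ mem s c') \/ (ind s c' = 0 /\ ~ mem s c')) ->
  (c = 3 \/ c = 4 \/ c = 6)%nat -> (1 <= m)%nat -> (1 <= f)%nat -> (1 <= a)%nat ->
  (forall s, (m <= s < m + K)%nat -> mem s c -> (f <= s)%nat) ->
  (forall s, (m <= s < m + K)%nat -> mem s c -> (a <= c * s)%nat) ->
  0 <= Y ->
  (forall H, (m <= H < m + K)%nat -> mem H c -> INR (6 - c) * Y - INR ((6 - c) * (5 - c)) * (Y * Y) <= / INR (S H)) ->
  sumR (fun s => w s * ind s c) (seq m K) <= lb c (/ INR f) (/ INR a) Y.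
Proof.
  intros Hind Hc Hm Hf Ha Hf' Ha' HY HYH.
  assert (lb_nonneg : 0 <= lb c (/ INR f) (/ INR a) Y) by (unfold lb; apply Rmax_l).
  destruct (classic (exists s, (m <= s < m + K)%nat /\ mem s c)) as [Hex|Hnex].
  - destruct (min_ex _ Hex) as [L [[HL1 HL2] HLmin]].
    destruct (max_ex _ (m + K) Hex) as [H [[HH1 HH2] HHmax]]. { intros n [? ?]; lia. }
    assert (HLH : (L <= H)%nat) by (apply HHmax; auto).
    apply (level_real c m L H f a Y _ Hc Hf (Hf' L HL1 HL2) Ha (Ha' L HL1 HL2) HY (HYH H HH1 HH2)).
    + eapply Rle_trans. 2: apply (window K m L H Hm ltac:(lia)).
      apply sumR_le_in. intros s Hs. apply in_seq in Hs.
      pose proof (w_nonneg s ltac:(lia)).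
      destruct (Hind s c) as [[-> Hms]|[-> _]].
      * assert (L <= s)%nat by (apply HLmin; split; auto; lia).
        assert (s <= H)%nat by (apply HHmax; split; auto; lia).
        rewrite (proj2 (Nat.leb_le L s)) by lia. rewrite (proj2 (Nat.leb_le s H)) by lia. simpl. lra.
      * destruct (andb _ _); lra.
  - eapply Rle_trans. 2: exact lb_nonneg.
    right. rewrite (sumR_ext_in _ (fun _ => 0)). rewrite sumR_const. ring.
    intros s Hs. apply in_seq in Hs. destruct (Hind s c) as [[_ Hms]|[-> _]].
    + exfalso. apply Hnex. exists s. split; auto; lia.
    + ring.
Qed.

Definition range (m K s : nat) : Prop := (m <= s < m + K)%nat.

Lemma side_bound (memo memt : nat -> nat -> Prop) (ind : nat -> nat -> R) (m K f : nat) (X Y : R) :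
  (forall s c, (ind s c = 1 /\ memo s c) \/ (ind s c = 0 /\ ~ memo s c)) ->
  (1 <= m)%nat -> (1 <= f)%nat ->
  (forall s c, range m K s -> In c levs -> memo s c -> (f <= s)%nat) ->
  (forall s c s' c', range m K s -> range m K s' -> In c levs -> In c' levs -> memo s c -> memt s' c' ->
      (6 * s < c * s + c' * s')%nat) ->
  ((X = 0 /\ forall s c, range m K s -> In c levs -> ~ memo s c) \/
   (exists a, (1 <= a)%nat /\ X = / INR a /\ forall s c, range m K s -> In c levs -> memo s c -> (a <= c * s)%nat)) ->
  (Y = 0 \/ exists b s1 c1, range m K s1 /\ In c1 levs /\ memt s1 c1 /\ b = (c1 * s1)%nat /\ (1 <= b)%nat /\ Y = / INR b) ->
  forall c, In c levs -> sumR (fun s => w s * ind s c) (seq m K) <= lb c (/ INR f) X Y.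
Proof.
  intros Hind Hm Hf Hfs Hcomp HX HYp c Hc.
  assert (Hc' : (c = 3 \/ c = 4 \/ c = 6)%nat) by (simpl in Hc; intuition).
  assert (HY0 : 0 <= Y).
  { destruct HYp as [->|[b [s1 [c1 [_ [_ [_ [_ [Hb ->]]]]]]]]]. lra. left. apply Rinv_0_lt_compat, lt_0_INR. lia. }
  destruct HX as [[-> Habs]|[a [Ha [-> Hmin]]]].
  - assert (0 <= lb c (/ INR f) 0 Y) by (unfold lb; apply Rmax_l).
    rewrite (sumR_ext_in _ (fun _ => 0)). rewrite sumR_const. lra.
    intros s Hs. apply in_seq in Hs. destruct (Hind s c) as [[_ Hms]|[-> _]].
    + exfalso. apply (Habs s c); auto.
    + ring.
  - apply (level_bound memo ind m K f a c Y Hind Hc' Hm Hf Ha).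
    + intros s Hs Hms. apply (Hfs s c); auto.
    + intros s Hs Hms. apply (Hmin s c); auto.
    + exact HY0.
    + intros H HH HmH. destruct HYp as [->|[b [s1 [c1 [Hs1 [Hc1 [Hm1 [-> [Hb ->]]]]]]]]].
      * assert (0 < / INR (S H)) by (apply Rinv_0_lt_compat, lt_0_INR; lia). nra.
      * apply H_bound; auto. specialize (Hcomp H c s1 c1 HH Hs1 Hc Hc1 HmH Hm1).
        destruct Hc' as [-> | [-> | ->]]; cbn [Nat.sub]; lia.
Qed.

Definition cols : list color := [cA; cB].
Definition Lst (Lf : color -> nat -> nat -> list nat) (col : color) (s c : nat) : list nat :=
  Lf col (6 * s)%nat (c * s)%nat.
Definition allL Lf m K := flat_map (fun col => flat_map (fun s => flat_map (fun c => Lst Lf col s c) levs) (seq m K)) cols.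
Definition Vl Lf m s := flat_map (fun s' => flat_map (fun col => flat_map (fun c => Lst Lf col s' c) levs) cols) (seq m (S s - m)).
Definition hc (c : nat) : R := if Nat.eqb c 4 then 3/7 else 2/7.
Definition gg Lf m K x := sumR (fun col => sumR (fun s => sumR (fun c => w s * hc c * indl x (Lst Lf col s c)) levs) (seq m K)) cols.
Definition sig Lf m K col c x := sumR (fun s => w s * indl x (Lst Lf col s c)) (seq m K).
Definition phi Lf m K x := sumR (fun s => w s * indl x (Vl Lf m s)) (seq m K) + / INR (m + K).

Lemma in_allL Lf m K x : In x (allL Lf m K) <->
  exists col s c, In col cols /\ In s (seq m K) /\ In c levs /\ In x (Lst Lf col s c).
Proof.
  unfold allL. rewrite in_flat_map. split.
  - intros [col [Hc H]]. rewrite in_flat_map in H. destruct H as [s [Hs H]].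
    rewrite in_flat_map in H. destruct H as [c [Hc' H]]. exists col, s, c. auto.
  - intros [col [s [c [H1 [H2 [H3 H4]]]]]]. exists col. split; auto.
    rewrite in_flat_map. exists s. split; auto. rewrite in_flat_map. exists c. auto.
Qed.

Lemma in_Vl Lf m s x : In x (Vl Lf m s) <->
  exists s' col c, In s' (seq m (S s - m)) /\ In col cols /\ In c levs /\ In x (Lst Lf col s' c).
Proof.
  unfold Vl. rewrite in_flat_map. split.
  - intros [s' [Hs H]]. rewrite in_flat_map in H. destruct H as [col [Hc H]].
    rewrite in_flat_map in H. destruct H as [c [Hc' H]]. exists s', col, c. auto.
  - intros [s' [col [c [H1 [H2 [H3 H4]]]]]]. exists s'. split; auto.
    rewrite in_flat_map. exists col. split; auto. rewrite in_flat_map. exists c. auto.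
Qed.

Lemma gg_expand Lf m K x : gg Lf m K x =
  2/7 * (sig Lf m K cA 3 x + sig Lf m K cB 3 x) + 3/7 * (sig Lf m K cA 4 x + sig Lf m K cB 4 x)
  + 2/7 * (sig Lf m K cA 6 x + sig Lf m K cB 6 x).
Proof.
  unfold gg, sig, cols. cbn [sumR].
  assert (Hcol : forall col, sumR (fun s => sumR (fun c => w s * hc c * indl x (Lst Lf col s c)) levs) (seq m K)
    = 2/7 * sumR (fun s => w s * indl x (Lst Lf col s 3)) (seq m K)
    + 3/7 * sumR (fun s => w s * indl x (Lst Lf col s 4)) (seq m K)
    + 2/7 * sumR (fun s => w s * indl x (Lst Lf col s 6)) (seq m K)).
  { intros col. rewrite <- !sumR_scal, <- !sumR_plus. apply sumR_ext_in. intros s _.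
    unfold levs, hc. cbn [sumR Nat.eqb]. ring. }
  rewrite !Hcol. ring.
Qed.

Lemma indl_spec x l : (indl x l = 1 /\ In x l) \/ (indl x l = 0 /\ ~ In x l).
Proof. unfold indl. destruct in_dec; auto. Qed.

Definition F2prop (F : Ffamily) : Prop := forall t k t' k', (0 < k <= t)%nat -> (0 < k' <= t')%nat ->
     (k + k' <= Nat.max t t')%nat -> forall x, F cA t k x -> F cB t' k' x -> False.
Definition LfProp (F : Ffamily) (Lf : color -> nat -> nat -> list nat) : Prop :=
  forall c t k, (0 < k <= t)%nat -> NoDup (Lf c t k) /\ length (Lf c t k) = k /\ Forall (F c t k) (Lf c t k).

Lemma levs_cases c : In c levs -> (c = 3 \/ c = 4 \/ c = 6)%nat.
Proof. simpl. intuition. Qed.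

Lemma elem_bound (F : Ffamily) Lf m K x :
  LfProp F Lf -> F2prop F -> (1 <= m)%nat -> In x (allL Lf m K) ->
  gg Lf m K x <= (1 + 4 / (7 * INR m)) * phi Lf m K x.
Proof.
  intros HLf HF2 Hm Hx.
  assert (HF : forall col s c, (1 <= s)%nat -> In c levs -> In x (Lst Lf col s c) -> F col (6 * s)%nat (c * s)%nat x).
  { intros col s c Hs Hc Hin. unfold Lst in Hin.
    assert (Hk : (0 < c * s <= 6 * s)%nat) by (destruct (levs_cases c Hc) as [-> | [-> | ->]]; lia).
    destruct (HLf col (6 * s)%nat (c * s)%nat Hk) as [_ [_ Hfa]]. rewrite Forall_forall in Hfa. auto. }
  assert (compat : forall s c s' c', range m K s -> range m K s' -> In c levs -> In c' levs ->
     In x (Lst Lf cA s c) -> In x (Lst Lf cB s' c') -> (6 * s < c * s + c' * s' /\ 6 * s' < c * s + c' * s')%nat).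
  { intros s c s' c' Hs Hs' Hc Hc' H1 H2. unfold range in *.
    pose proof (HF cA s c ltac:(lia) Hc H1) as F1. pose proof (HF cB s' c' ltac:(lia) Hc' H2) as F2'.
    assert (Hk : (0 < c * s <= 6 * s)%nat) by (destruct (levs_cases c Hc) as [-> | [-> | ->]]; lia).
    assert (Hk' : (0 < c' * s' <= 6 * s')%nat) by (destruct (levs_cases c' Hc') as [-> | [-> | ->]]; lia).
    destruct (Nat.le_gt_cases (c * s + c' * s') (Nat.max (6 * s) (6 * s'))) as [Hle|Hgt].
    - exfalso. exact (HF2 _ _ _ _ Hk Hk' Hle x F1 F2').
    - pose proof (Nat.le_max_l (6 * s) (6 * s')). pose proof (Nat.le_max_r (6 * s) (6 * s')). lia. }
  destruct (min_ex (fun s => range m K s /\ exists col c, In c levs /\ In x (Lst Lf col s c))) as [f [[Hfr [colf [cf [Hcf Hxf]]]] Hfmin]].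
  { apply in_allL in Hx. destruct Hx as [col [s [c [_ [Hs [Hc Hin]]]]]]. apply in_seq in Hs.
    exists s. split. unfold range; lia. exists col, c. auto. }
  assert (Hf1 : (1 <= f)%nat) by (unfold range in Hfr; lia).
  assert (Hfs : forall col s c, range m K s -> In c levs -> In x (Lst Lf col s c) -> (f <= s)%nat).
  { intros col s c Hs Hc Hin. apply Hfmin. split; auto. exists col, c. auto. }
  assert (Hphi : phi Lf m K x = / INR f).
  { unfold phi. rewrite (sumR_ext_in _ (fun s => w s * (if (f <=? s)%nat then 1 else 0))).
    - unfold range in Hfr. rewrite tele_max by lia. rewrite Nat.max_r by lia. ring.
    - intros s Hs. apply in_seq in Hs. f_equal. unfold indl.
      destruct (in_dec Nat.eq_dec x (Vl Lf m s)) as [Hin|Hnin]; destruct (Nat.leb_spec f s); auto.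
      + exfalso. apply in_Vl in Hin. destruct Hin as [s' [col [c [Hs' [_ [Hc Hin]]]]]].
        apply in_seq in Hs'. assert (f <= s')%nat by (apply (Hfs col s' c); auto; unfold range; lia). lia.
      + exfalso. apply Hnin. apply in_Vl.
        exists f, colf, cf. repeat split; auto. apply in_seq. unfold range in Hfr. lia.
        destruct colf; simpl; auto. }
  assert (Sside : forall col, (forall s c, range m K s -> In c levs -> ~ In x (Lst Lf col s c)) \/
    exists a s0 c0, range m K s0 /\ In c0 levs /\ In x (Lst Lf col s0 c0) /\ a = (c0 * s0)%nat /\
      forall s c, range m K s -> In c levs -> In x (Lst Lf col s c) -> (a <= c * s)%nat).
  { intros col. destruct (classic (exists s c, range m K s /\ In c levs /\ In x (Lst Lf col s c))) as [Hex|Hno].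
    - right. destruct (min_ex (fun k => exists s c, range m K s /\ In c levs /\ In x (Lst Lf col s c) /\ k = (c * s)%nat))
        as [a [[s0 [c0 [H1 [H2 [H3 H4]]]]] Hmin]].
      { destruct Hex as [s [c [? [? ?]]]]. exists (c * s)%nat, s, c. auto. }
      exists a, s0, c0. refine (conj H1 (conj H2 (conj H3 (conj H4 _)))). intros s c Hs Hc Hin. apply Hmin. exists s, c. auto.
    - left. intros s c Hs Hc Hin. apply Hno. exists s, c. auto. }
  assert (HF0 : 0 < / INR f) by (apply Rinv_0_lt_compat, lt_0_INR; lia).
  assert (HXs : forall col, exists X, 0 <= X /\ X <= / INR f / 3 /\
    ((X = 0 /\ forall s c, range m K s -> In c levs -> ~ In x (Lst Lf col s c)) \/
     (exists a, (1 <= a)%nat /\ X = / INR a /\ forall s c, range m K s -> In c levs -> In x (Lst Lf col s c) -> (a <= c * s)%nat)) /\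
    (X = 0 \/ exists b s1 c1, range m K s1 /\ In c1 levs /\ In x (Lst Lf col s1 c1) /\ b = (c1 * s1)%nat /\ (1 <= b)%nat /\ X = / INR b)).
  { intros col. destruct (Sside col) as [Habs | [a [s0 [c0 [Hs0 [Hc0 [Hin0 [Ha Hmin]]]]]]]].
    - exists 0. split. lra. split. lra. split; left; auto.
    - assert (Hfs0 : (f <= s0)%nat) by (apply (Hfs col s0 c0); auto).
      assert (Ha3 : (3 * f <= a)%nat) by (subst a; destruct (levs_cases c0 Hc0) as [-> | [-> | ->]]; lia).
      exists (/ INR a). split. left. apply Rinv_0_lt_compat, lt_0_INR; lia. split.
      + replace (/ INR f / 3) with (/ INR (3 * f)). apply inv_le; lia.
        rewrite mult_INR. replace (INR 3) with 3 by (simpl; ring). field. apply not_0_INR. lia.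
      + split.
        * right. exists a. refine (conj _ (conj eq_refl Hmin)). lia.
        * right. exists a, s0, c0. refine (conj Hs0 (conj Hc0 (conj Hin0 (conj Ha (conj _ eq_refl))))). lia. }
  destruct (HXs cA) as [X [HX0 [HX1 [HXo HXt]]]].
  destruct (HXs cB) as [Y [HY0 [HY1 [HYo HYt]]]].
  assert (HA : forall c, In c levs -> sig Lf m K cA c x <= lb c (/ INR f) X Y).
  { intros c Hc. unfold sig.
    apply (side_bound (fun s c => In x (Lst Lf cA s c)) (fun s c => In x (Lst Lf cB s c))
             (fun s c => indl x (Lst Lf cA s c)) m K f X Y); auto.
    - intros; apply indl_spec.
    - intros s0 c0 Hs0 Hc0 Hin. apply (Hfs cA s0 c0); auto.
    - intros s0 c0 s' c' H1 H2 H3 H4 H5 H6. apply (compat s0 c0 s' c'); auto. }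
  assert (HB : forall c, In c levs -> sig Lf m K cB c x <= lb c (/ INR f) Y X).
  { intros c Hc. unfold sig.
    apply (side_bound (fun s c => In x (Lst Lf cB s c)) (fun s c => In x (Lst Lf cA s c))
             (fun s c => indl x (Lst Lf cB s c)) m K f Y X); auto.
    - intros; apply indl_spec.
    - intros s0 c0 Hs0 Hc0 Hin. apply (Hfs cB s0 c0); auto.
    - intros s0 c0 s' c' H1 H2 H3 H4 H5 H6. destruct (compat s' c' s0 c0) as [_ Hc2]; auto. lia. }
  assert (Hl3 : In 3%nat levs) by (simpl; auto). assert (Hl4 : In 4%nat levs) by (simpl; auto).
  assert (Hl6 : In 6%nat levs) by (simpl; auto).
  pose proof (elem_real (/ INR f) X Y _ _ _ _ _ _ HF0 HX0 HX1 HY0 HY1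
     (HA 3%nat Hl3) (HA 4%nat Hl4) (HA 6%nat Hl6) (HB 3%nat Hl3) (HB 4%nat Hl4) (HB 6%nat Hl6)) as Hel.
  rewrite gg_expand, Hphi.
  assert (Hfm : / INR f <= / INR m) by (apply inv_le; unfold range in Hfr; lia).
  assert (Hm0 : 0 < INR m) by (apply lt_0_INR; lia).
  assert (Hf0 : INR f <> 0) by (apply not_0_INR; lia). assert (Hm0' : INR m <> 0) by lra.
  replace ((1 + 4 / (7 * INR m)) * / INR f) with (/ INR f + 4/7 * (/ INR f * / INR m)) by (field; auto).
  assert (/ INR f * / INR f <= / INR f * / INR m) by (apply Rmult_le_compat_l; lra).
  lra.
Qed.
Definition Hs m K := sumR (fun s => w s * INR s) (seq m K).
Definition CompProp (F : Ffamily) (Rc lam : R) : Prop :=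
  forall t : nat, (0 < t)%nat -> card_leR (union_upto F t) (Rc * INR t + lam).

Lemma Lst_len F Lf col s c : LfProp F Lf -> (1 <= s)%nat -> In c levs ->
  NoDup (Lst Lf col s c) /\ length (Lst Lf col s c) = (c * s)%nat /\ Forall (F col (6 * s)%nat (c * s)%nat) (Lst Lf col s c).
Proof.
  intros HLf Hs Hc. apply HLf. destruct (levs_cases c Hc) as [-> | [-> | ->]]; lia.
Qed.

Lemma key (F : Ffamily) Lf Rc lam m K : LfProp F Lf -> F2prop F -> CompProp F Rc lam -> (1 <= m)%nat ->
  60/7 * Hs m K <= (1 + 4 / (7 * INR m)) * (6 * Rc * Hs m K + 2 * Rabs lam + 6 * Rabs Rc).
Proof.
  intros HLf HF2 Hcomp Hm.
  set (U := nodup Nat.eq_dec (allL Lf m K)).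
  assert (HUnd : NoDup U) by apply NoDup_nodup.
  assert (HinU : forall col s c y, In s (seq m K) -> In c levs -> In y (Lst Lf col s c) -> In y U).
  { intros col s c y Hs Hc Hy. apply nodup_In. apply in_allL. exists col, s, c. repeat split; auto. destruct col; simpl; auto. }
  set (Tot := sumR (fun col => sumR (fun s => sumR (fun c => w s * hc c * INR (length (Lst Lf col s c))) levs) (seq m K)) cols).
  assert (T1 : Tot = 60/7 * Hs m K).
  { unfold Tot, Hs, cols. cbn [sumR].
    assert (E : forall col, sumR (fun s => sumR (fun c => w s * hc c * INR (length (Lst Lf col s c))) levs) (seq m K)
       = 30/7 * sumR (fun s => w s * INR s) (seq m K)).
    { intros col. rewrite <- sumR_scal. apply sumR_ext_in. intros s Hs. apply in_seq in Hs.
      unfold levs. cbn [sumR].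
      rewrite (proj1 (proj2 (Lst_len F Lf col s 3 HLf ltac:(lia) ltac:(simpl; auto)))).
      rewrite (proj1 (proj2 (Lst_len F Lf col s 4 HLf ltac:(lia) ltac:(simpl; auto)))).
      rewrite (proj1 (proj2 (Lst_len F Lf col s 6 HLf ltac:(lia) ltac:(simpl; auto)))).
      rewrite !mult_INR. unfold hc. cbn [Nat.eqb].
      replace (INR 3) with 3 by (simpl; ring). replace (INR 4) with 4 by (simpl; ring).
      replace (INR 6) with 6 by (simpl; ring). lra. }
    rewrite !E. lra. }
  assert (T2 : Tot = sumR (gg Lf m K) U).
  { unfold Tot, gg.
    rewrite (sumR_ext_in _ (fun col => sumR (fun x => sumR (fun s => sumR (fun c => w s * hc c * indl x (Lst Lf col s c)) levs) (seq m K)) U)).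
    - apply sumR_swap.
    - intros col _. symmetry.
      rewrite (sumR_swap (fun x s => sumR (fun c => w s * hc c * indl x (Lst Lf col s c)) levs) U (seq m K)).
      symmetry. apply sumR_ext_in. intros s Hs.
      rewrite (sumR_swap (fun x c => w s * hc c * indl x (Lst Lf col s c)) U levs).
      apply sumR_ext_in. intros c Hc.
      rewrite sumR_scal. f_equal. apply in_seq in Hs.
      destruct (Lst_len F Lf col s c HLf ltac:(lia) Hc) as [Hnd _].
      symmetry. apply count_ind; auto. intros y Hy. apply (HinU col s c y); auto. apply in_seq; lia. }
  assert (T3 : sumR (gg Lf m K) U <= (1 + 4 / (7 * INR m)) * sumR (phi Lf m K) U).
  { rewrite <- sumR_scal. apply sumR_le_in. intros x Hx. apply elem_bound with (F := F); auto.
    apply nodup_In in Hx. exact Hx. }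
  assert (T4 : sumR (phi Lf m K) U = sumR (fun s => w s * sumR (fun x => indl x (Vl Lf m s)) U) (seq m K)
                                     + / INR (m + K) * INR (length U)).
  { unfold phi. rewrite sumR_plus, sumR_const. f_equal.
    rewrite sumR_swap. apply sumR_ext_in. intros s _. apply sumR_scal. }
  assert (T5 : forall s, In s (seq m K) -> sumR (fun x => indl x (Vl Lf m s)) U <= Rc * INR (6 * s) + lam).
  { intros s Hs. apply in_seq in Hs.
    rewrite (sumR_ext_in _ (fun x => if (fun y => if in_dec Nat.eq_dec y (Vl Lf m s) then true else false) x then 1 else 0)).
    2:{ intros x _. unfold indl. destruct in_dec; reflexivity. }
    rewrite count_filter. apply (Hcomp (6 * s)%nat ltac:(lia)).
    - apply NoDup_filter. exact HUnd.
    - rewrite Forall_forall. intros x Hx. apply filter_In in Hx. destruct Hx as [_ Hx].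
      destruct (in_dec Nat.eq_dec x (Vl Lf m s)) as [Hin|]; [|discriminate].
      apply in_Vl in Hin. destruct Hin as [s' [col [c [Hs' [_ [Hc Hin]]]]]]. apply in_seq in Hs'.
      destruct (Lst_len F Lf col s' c HLf ltac:(lia) Hc) as [_ [_ Hfa]]. rewrite Forall_forall in Hfa.
      exists col, (6 * s')%nat, (c * s')%nat. split. destruct (levs_cases c Hc) as [-> | [-> | ->]]; lia.
      split. lia. apply Hfa; auto. }
  assert (T6 : INR (length U) <= Rc * INR (6 * (m + K)) + lam).
  { apply (Hcomp (6 * (m + K))%nat ltac:(lia)). exact HUnd.
    rewrite Forall_forall. intros x Hx. apply nodup_In in Hx. apply in_allL in Hx.
    destruct Hx as [col [s [c [_ [Hs [Hc Hin]]]]]]. apply in_seq in Hs.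
    destruct (Lst_len F Lf col s c HLf ltac:(lia) Hc) as [_ [_ Hfa]]. rewrite Forall_forall in Hfa.
    exists col, (6 * s)%nat, (c * s)%nat. split. destruct (levs_cases c Hc) as [-> | [-> | ->]]; lia.
    split. lia. apply Hfa; auto. }
  set (W := sumR w (seq m K)).
  assert (HW : 0 <= W <= 1).
  { assert (E : W = / INR m - / INR (m + K)).
    { transitivity (/ INR (Nat.max m m) - / INR (m + K)). 2: rewrite Nat.max_id; reflexivity.
      rewrite <- (tele_max K m m) by lia. unfold W. apply sumR_ext_in.
      intros s Hs. apply in_seq in Hs. rewrite (proj2 (Nat.leb_le m s)) by lia. ring. }
    rewrite E. pose proof (inv_le (m + K) m ltac:(lia) ltac:(lia)).
    pose proof (inv_le m 1 ltac:(lia) ltac:(lia)). simpl in H0. rewrite Rinv_1 in H0.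
    pose proof (inv_pos (m + K) ltac:(lia)). lra. }
  assert (T7 : sumR (fun s => w s * sumR (fun x => indl x (Vl Lf m s)) U) (seq m K) <= 6 * Rc * Hs m K + lam * W).
  { eapply Rle_trans.
    - apply sumR_le_in with (g := fun s => 6 * Rc * (w s * INR s) + lam * w s).
      intros s Hs. pose proof (T5 s Hs). apply in_seq in Hs. pose proof (w_nonneg s ltac:(lia)).
      rewrite mult_INR in H. replace (INR 6) with 6 in H by (simpl; ring).
      replace (6 * Rc * (w s * INR s) + lam * w s) with (w s * (Rc * (6 * INR s) + lam)) by ring.
      apply Rmult_le_compat_l; auto.
    - rewrite sumR_plus, !sumR_scal. unfold Hs, W. lra. }
  assert (T8 : / INR (m + K) * INR (length U) <= 6 * Rabs Rc + Rabs lam).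
  { assert (Hp : 0 < INR (m + K)) by (apply lt_0_INR; lia).
    assert (Hq : / INR (m + K) <= 1) by (pose proof (inv_le (m + K) 1 ltac:(lia) ltac:(lia)); simpl in H; rewrite Rinv_1 in H; lra).
    assert (Hq0 : 0 < / INR (m + K)) by (apply Rinv_0_lt_compat; lra).
    eapply Rle_trans. apply Rmult_le_compat_l. lra. exact T6.
    rewrite mult_INR. replace (INR 6) with 6 by (simpl; ring).
    replace (/ INR (m + K) * (Rc * (6 * INR (m + K)) + lam)) with (6 * Rc + lam * / INR (m + K)) by (field; lra).
    pose proof (Rle_abs Rc). pose proof (Rabs_pos lam).
    assert (lam * / INR (m + K) <= Rabs lam).
    { destruct (Rle_dec 0 lam). rewrite Rabs_right by lra. nra. pose proof (Rabs_pos lam). nra. }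
    lra. }
  assert (Hd : 0 <= 1 + 4 / (7 * INR m)).
  { assert (0 < INR m) by (apply lt_0_INR; lia). assert (0 < 4 / (7 * INR m)) by (apply Rdiv_lt_0_compat; lra). lra. }
  rewrite <- T1, T2. eapply Rle_trans. exact T3. apply Rmult_le_compat_l. exact Hd.
  rewrite T4.
  assert (lam * W <= Rabs lam).
  { destruct (Rle_dec 0 lam). rewrite Rabs_right by lra. nra. pose proof (Rabs_pos lam). nra. }
  lra.
Qed.

Lemma lists_exist (F : Ffamily) :
  (forall c t k, (0 < k <= t)%nat -> card_ge (F c t k) k) -> exists Lf, LfProp F Lf.
Proof.
  intros H1.
  exists (fun c t k => match excluded_middle_informative ((0 < k <= t)%nat) with
                       | left h => proj1_sig (constructive_indefinite_description _ (H1 c t k h))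
                       | right _ => nil end).
  intros c t k Hk. destruct (excluded_middle_informative ((0 < k <= t)%nat)) as [h|h].
  - destruct (constructive_indefinite_description _ (H1 c t k h)) as [l Hl]. simpl. exact Hl.
  - contradiction.
Qed.

Lemma Hs_eq m K : (1 <= m)%nat -> Hs m K = sumR (fun s => / INR (S s)) (seq m K).
Proof. intros Hm. unfold Hs. apply sumR_ext_in. intros s Hs. apply in_seq in Hs. apply w_mul. lia. Qed.

Theorem mainTheorem10 (Rc : R) (hR : Rc < 10 / 7) :
  ~ exists F : Ffamily, F_system F /\ competitive Rc F.
Proof.
  intros [F [[Hpos [HF1 HF2]] [lam Hcomp]]].
  destruct (lists_exist F HF1) as [Lf HLf].
  set (eta := (60/7 - 6 * Rc) / 2).
  assert (Heta : 0 < eta) by (unfold eta; lra).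
  destruct (INR_unbounded (24 * Rabs Rc / (7 * eta))) as [n Hn].
  set (m := S n).
  assert (Hm1 : (1 <= m)%nat) by (unfold m; lia).
  assert (HmR : 0 < INR m) by (apply lt_0_INR; lia).
  assert (Hmn : INR n < INR m) by (apply lt_INR; unfold m; lia).
  set (d := 4 / (7 * INR m)).
  assert (Hd0 : 0 <= d) by (unfold d; apply Rlt_le, Rdiv_lt_0_compat; lra).
  assert (Hd1 : d <= 1).
  { unfold d. assert (1 <= INR m) by (apply (le_INR 1); lia).
    apply (Rmult_le_reg_r (7 * INR m)). lra. unfold Rdiv. rewrite Rmult_assoc, Rinv_l by lra. lra. }
  assert (Hd2 : 6 * Rc * d <= eta).
  { assert (E : 6 * Rabs Rc * d = 24 * Rabs Rc / (7 * INR m)) by (unfold d; field; lra).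
    assert (24 * Rabs Rc / (7 * INR m) <= eta).
    { apply (Rmult_le_reg_r (7 * INR m)). lra. unfold Rdiv. rewrite Rmult_assoc, Rinv_l by lra.
      assert (24 * Rabs Rc / (7 * eta) < INR m) by lra.
      apply (Rmult_lt_compat_r (7 * eta)) in H. 2: lra. unfold Rdiv in H.
      rewrite Rmult_assoc, Rinv_l in H by lra. lra. }
    pose proof (Rle_abs Rc). assert (6 * Rc * d <= 6 * Rabs Rc * d) by (apply Rmult_le_compat_r; lra). lra. }
  set (B0 := 2 * Rabs lam + 6 * Rabs Rc).
  assert (HB0 : 0 <= B0) by (unfold B0; pose proof (Rabs_pos lam); pose proof (Rabs_pos Rc); lra).
  destruct (INR_unbounded (4 * B0 / eta + 2)) as [J HJ].
  destruct (harm_div m Hm1 J) as [K HK].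
  rewrite <- Hs_eq in HK by exact Hm1.
  pose proof (key F Lf Rc lam m K HLf HF2 Hcomp Hm1) as Hkey. fold d in Hkey.
  set (h := Hs m K) in *.
  assert (Hh0 : 0 <= h).
  { unfold h. rewrite Hs_eq by exact Hm1. apply sumR_nonneg. intros s Hs. apply in_seq in Hs.
    left. apply inv_pos. lia. }
  assert (Hk2 : eta * h <= 2 * B0).
  { assert (60/7 * h - (1 + d) * (6 * Rc * h) <= (1 + d) * B0) by (unfold B0 in *; lra).
    assert ((1 + d) * B0 <= 2 * B0) by (apply Rmult_le_compat_r; lra).
    assert (6 * Rc * d * h <= eta * h) by (apply Rmult_le_compat_r; lra).
    unfold eta in *. nra. }
  assert (INR J / 2 <= h) by lra.
  assert (4 * B0 / eta < INR J) by lra.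
  assert (4 * B0 < INR J * eta).
  { apply (Rmult_lt_compat_r eta) in H0; auto. unfold Rdiv in H0. rewrite Rmult_assoc, Rinv_l in H0 by lra. lra. }
  nra.
Qed.
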